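(* Fix $a>0$ and let $\Phi:\mathbb{R}\to\mathbb{R}$ be the static kink on the wormhole of throat radius $a$, i.e. the odd smooth solution of \[ \Phi''(r)+\frac{2r}{r^2+a^2}\Phi'(r) = -2\Phi(r)\bigl(1-\Phi(r)^2\bigr), \qquad r\in\mathbb{R}, \] satisfying $\Phi(r)\to 1$ as $r\to+\infty$ and $\Phi(r)\to -1$ as $r\to-\infty$. Then $\Phi$ is linearly stable: the Schrödinger operator \[ L=-\frac{d^2}{dr^2}+V(r),\qquad V(r)=\frac{a^2}{(r^2+a^2)^2}-2\bigl(1-3\Phi(r)^2\bigr), \] acting on smooth square-integrable functions on $\mathbb{R}$, has no negative eigenvalues; that is, if $v\neq 0$ is smooth and square integrable on $\mathbb{R}$ with $Lv=\omega^2 v$ for some real number $\omega^2$, then $\omega^2\ge 0$.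
   Context: This arises from the field equation $\phi_{tt}=\phi_{rr}+\frac{2r}{r^2+a^2}\phi_r+2\phi(1-\phi^2)$ for spherically symmetric $\phi^4$ fields on the wormhole metric $g=-dt^2+dr^2+(r^2+a^2)(d\vartheta^2+\sin^2\vartheta\,d\varphi^2)$; linearising $\phi=\Phi+e^{i\omega t}(r^2+a^2)^{-1/2}v(r)$ about the static kink $\Phi$ gives the eigenvalue problem $Lv=\omega^2v$. Linear stability of $\Phi$ means that $L$ has no negative eigenvalues. *)

(* Defs.v *)
From Stdlib Require Import Reals.
From Coquelicot Require Import Coquelicot.
Open Scope R_scope.

Definition smooth (f : R -> R) : Prop :=
  forall (n : nat) (x : R), ex_derive_n f n x.

Definition square_integrable (f : R -> R) : Prop :=
  ex_RInt_gen (fun x => f x ^ 2) (Rbar_locally m_infty) (Rbar_locally p_infty).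

Definition is_static_kink (a : R) (Phi : R -> R) : Prop :=
  smooth Phi /\
  (forall r, Phi (- r) = - Phi r) /\
  (forall r, Derive_n Phi 2 r + 2 * r / (r ^ 2 + a ^ 2) * Derive Phi r
             = - 2 * Phi r * (1 - Phi r ^ 2)) /\
  is_lim Phi p_infty 1 /\
  is_lim Phi m_infty (-1).

Definition kink_potential (a : R) (Phi : R -> R) (r : R) : R :=
  a ^ 2 / (r ^ 2 + a ^ 2) ^ 2 - 2 * (1 - 3 * Phi r ^ 2).

Definition L_op (a : R) (Phi v : R -> R) (r : R) : R :=
  - Derive_n v 2 r + kink_potential a Phi r * v r.

(* Main.v *)
Require Import Defs.
From Stdlib Require Import Reals.
From Coquelicot Require Import Coquelicot.
From Stdlib Require Import Lra Psatz.
Open Scope R_scope.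


Lemma lim_p (f : R -> R) (l : R) : is_lim f p_infty l ->
  forall eps, 0 < eps -> exists M, forall x, M < x -> Rabs (f x - l) < eps.
Proof.
  intros H eps He.
  apply (H (fun y => Rabs (y - l) < eps)).
  exists (mkposreal eps He). intros y Hy. exact Hy.
Qed.

Lemma lim_m (f : R -> R) (l : R) : is_lim f m_infty l ->
  forall eps, 0 < eps -> exists M, forall x, x < M -> Rabs (f x - l) < eps.
Proof.
  intros H eps He.
  apply (H (fun y => Rabs (y - l) < eps)).
  exists (mkposreal eps He). intros y Hy. exact Hy.
Qed.

Lemma der_cont (f : R -> R) x l : is_derive f x l -> continuity_pt f x.
Proof.
  intros H. apply derivable_continuous_pt. exists l. apply is_derive_Reals. exact H.
Qed.

Lemma quot_eq (a b e : R) : e <> 0 -> a - b = ((a - b) / e) * e.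
Proof. intros. field. auto. Qed.

Lemma fdt (h : R -> R) c l : is_derive h c l -> (forall x, h x <= h c) -> l = 0.
Proof.
  intros H Hm. apply is_derive_Reals in H.
  destruct (Rtotal_order l 0) as [Hl|[Hl|Hl]]; auto; exfalso.
  - destruct (H (- l / 2)) as [d Hd]; [lra|].
    set (e := - (d/2)).
    assert (He : e <> 0) by (unfold e; destruct d; simpl; lra).
    assert (Hae : Rabs e < d) by (unfold e; destruct d; simpl; rewrite Rabs_left; lra).
    specialize (Hd e He Hae). specialize (Hm (c + e)).
    assert (e < 0) by (unfold e; destruct d; simpl; lra).
    apply Rabs_def2 in Hd. destruct Hd as [Hd1 Hd2].
    pose proof (quot_eq (h (c + e)) (h c) e He).
    set (q := (h (c + e) - h c) / e) in *.
    nra.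
  - destruct (H (l / 2)) as [d Hd]; [lra|].
    set (e := d/2).
    assert (He : e <> 0) by (unfold e; destruct d; simpl; lra).
    assert (Hae : Rabs e < d) by (unfold e; destruct d; simpl; rewrite Rabs_right; lra).
    specialize (Hd e He Hae). specialize (Hm (c + e)).
    assert (e > 0) by (unfold e; destruct d; simpl; lra).
    apply Rabs_def2 in Hd. destruct Hd as [Hd1 Hd2].
    pose proof (quot_eq (h (c + e)) (h c) e He).
    set (q := (h (c + e) - h c) / e) in *.
    nra.
Qed.

Lemma sdt (h h1 : R -> R) c l : (forall x, is_derive h x (h1 x)) ->
  is_derive h1 c l -> (forall x, h x <= h c) -> l <= 0.
Proof.
  intros Hd H Hm.
  assert (H0 : h1 c = 0) by (apply (fdt h c); auto).
  apply is_derive_Reals in H.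
  destruct (Rle_or_lt l 0) as [Hl|Hl]; auto; exfalso.
  destruct (H (l / 2)) as [d Hd2]; [lra|].
  assert (Hdp : 0 < d) by (destruct d; simpl; auto).
  destruct (MVT_cor2 h h1 c (c + d/2)) as [xi [Heq Hxi]]; [lra| |].
  { intros x _. apply is_derive_Reals. apply Hd. }
  set (e := xi - c).
  assert (He : e <> 0) by (unfold e; lra).
  assert (Hae : Rabs e < d) by (unfold e; rewrite Rabs_right; lra).
  specialize (Hd2 e He Hae).
  replace (c + e) with xi in Hd2 by (unfold e; ring).
  rewrite H0 in Hd2.
  apply Rabs_def2 in Hd2. destruct Hd2 as [Hd1 Hd2].
  assert (Hx : h1 xi = ((h1 xi - 0) / e) * e) by (field; auto).
  set (q := (h1 xi - 0) / e) in *.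
  specialize (Hm (c + d/2)).
  assert (e > 0) by (unfold e; lra).
  assert (Hp : h1 xi > 0) by (rewrite Hx; apply Rmult_lt_0_compat; lra).
  assert (Hp2 : h1 xi * (c + d / 2 - c) > 0) by (apply Rmult_lt_0_compat; lra).
  lra.
Qed.

Lemma monoR (E E1 : R -> R) x0 : (forall x, is_derive E x (E1 x)) ->
  (forall x, x0 <= x -> E1 x <= 0) -> forall y, x0 <= y -> E y <= E x0.
Proof.
  intros Hd Hs y Hy. destruct (Req_dec y x0) as [->|Hne]; [lra|].
  destruct (MVT_cor2 E E1 x0 y) as [xi [Heq Hxi]]; [lra| |].
  { intros x _. apply is_derive_Reals. apply Hd. }
  assert (E1 xi <= 0) by (apply Hs; lra). nra.
Qed.

Lemma monoL (E E1 : R -> R) x0 : (forall x, is_derive E x (E1 x)) ->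
  (forall x, x <= x0 -> 0 <= E1 x) -> forall y, y <= x0 -> E y <= E x0.
Proof.
  intros Hd Hs y Hy. destruct (Req_dec y x0) as [->|Hne]; [lra|].
  destruct (MVT_cor2 E E1 y x0) as [xi [Heq Hxi]]; [lra| |].
  { intros x _. apply is_derive_Reals. apply Hd. }
  assert (0 <= E1 xi) by (apply Hs; lra). nra.
Qed.

Lemma gmax (f : R -> R) x1 M1 M2 : (forall x, continuity_pt f x) ->
  (forall x, M1 < x -> f x < f x1) -> (forall x, x < M2 -> f x < f x1) ->
  exists c, forall x, f x <= f c.
Proof.
  intros Hc H1 H2.
  destruct (continuity_ab_maj f (Rmin M2 x1) (Rmax M1 x1)) as [c [Hc1 Hc2]].
  { pose proof (Rmin_r M2 x1); pose proof (Rmax_r M1 x1); lra. }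
  { intros; apply Hc. }
  exists c. intros x.
  assert (Hx1 : f x1 <= f c).
  { apply Hc1. pose proof (Rmin_r M2 x1); pose proof (Rmax_r M1 x1); lra. }
  destruct (Rlt_or_le x (Rmin M2 x1)) as [Hl|Hl].
  { pose proof (Rmin_l M2 x1). specialize (H2 x). lra. }
  destruct (Rlt_or_le (Rmax M1 x1) x) as [Hr|Hr].
  { pose proof (Rmax_l M1 x1). specialize (H1 x). lra. }
  apply Hc1; lra.
Qed.
Lemma int_bounds (f : R -> R) a b :
  (forall x, continuity_pt f x) -> ex_RInt f a b.
Proof.
  intros Hc. apply (ex_RInt_continuous (V := R_CompleteNormedModule)). intros z _.
  apply continuity_pt_filterlim. apply Hc.
Qed.

Lemma gen_get (f : R -> R) :
  ex_RInt_gen f (Rbar_locally m_infty) (Rbar_locally p_infty) ->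
  exists l M N, forall a b, a < M -> N < b -> exists y, is_RInt f a b y /\ Rabs (y - l) < 1.
Proof.
  intros [l Hl].
  destruct (Hl (fun y => Rabs (y - l) < 1)) as [Q R HQ HR HP].
  { exists (mkposreal 1 Rlt_0_1). intros y Hy. exact Hy. }
  destruct HQ as [M HM]. destruct HR as [N HN].
  exists l, M, N. intros a b Ha Hb.
  destruct (HP a b (HM a Ha) (HN b Hb)) as [y [Hy1 Hy2]].
  exists y; split; auto.
Qed.

Lemma noint_R (f : R -> R) T : (forall x, 0 <= f x) -> (forall x, continuity_pt f x) ->
  (forall x, T <= x -> 1 <= f x) ->
  ex_RInt_gen f (Rbar_locally m_infty) (Rbar_locally p_infty) -> False.
Proof.
  intros Hp Hc H1 Hg.
  destruct (gen_get f Hg) as [l [M [N HMN]]].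
  set (a := Rmin (M - 1) T). set (b := Rmax (N + 1) T + Rabs l + 2).
  assert (Ha : a < M) by (unfold a; pose proof (Rmin_l (M-1) T); lra).
  assert (HaT : a <= T) by (unfold a; apply Rmin_r).
  assert (Hb : N < b) by (unfold b; pose proof (Rmax_l (N+1) T); pose proof (Rabs_pos l); lra).
  assert (HbT : T + Rabs l + 2 <= b) by (unfold b; pose proof (Rmax_r (N+1) T); lra).
  destruct (HMN a b Ha Hb) as [y [Hy Hyl]].
  apply (is_RInt_unique (V := R_CompleteNormedModule)) in Hy.
  rewrite <- (RInt_Chasles f a T b) in Hy by (apply int_bounds; auto).
  assert (H0 : 0 <= RInt f a T) by (apply RInt_ge_0; auto; apply int_bounds; auto).
  assert (H2 : RInt (fun _ => 1) T b <= RInt f T b).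
  { apply RInt_le.
    - pose proof (Rabs_pos l); lra.
    - apply (ex_RInt_const (V := R_NormedModule)).
    - apply int_bounds; auto.
    - intros x Hx; apply H1; lra. }
  rewrite RInt_const in H2.
  change (plus (RInt f a T) (RInt f T b)) with (RInt f a T + RInt f T b) in Hy.
  change (scal (b - T) 1) with ((b - T) * 1) in H2.
  apply Rabs_def2 in Hyl. pose proof (Rle_abs l). lra.
Qed.

Lemma noint_L (f : R -> R) T : (forall x, 0 <= f x) -> (forall x, continuity_pt f x) ->
  (forall x, x <= T -> 1 <= f x) ->
  ex_RInt_gen f (Rbar_locally m_infty) (Rbar_locally p_infty) -> False.
Proof.
  intros Hp Hc H1 Hg.
  destruct (gen_get f Hg) as [l [M [N HMN]]].
  set (b := Rmax (N + 1) T). set (a := Rmin (M - 1) T - Rabs l - 2).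
  assert (Hb : N < b) by (unfold b; pose proof (Rmax_l (N+1) T); lra).
  assert (HbT : T <= b) by (unfold b; apply Rmax_r).
  assert (Ha : a < M) by (unfold a; pose proof (Rmin_l (M-1) T); pose proof (Rabs_pos l); lra).
  assert (HaT : a <= T - Rabs l - 2) by (unfold a; pose proof (Rmin_r (M-1) T); lra).
  destruct (HMN a b Ha Hb) as [y [Hy Hyl]].
  apply (is_RInt_unique (V := R_CompleteNormedModule)) in Hy.
  rewrite <- (RInt_Chasles f a T b) in Hy by (apply int_bounds; auto).
  assert (H0 : 0 <= RInt f T b) by (apply RInt_ge_0; auto; apply int_bounds; auto).
  assert (H2 : RInt (fun _ => 1) a T <= RInt f a T).
  { apply RInt_le.
    - pose proof (Rabs_pos l); lra.
    - apply (ex_RInt_const (V := R_NormedModule)).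
    - apply int_bounds; auto.
    - intros x Hx; apply H1; lra. }
  rewrite RInt_const in H2.
  change (plus (RInt f a T) (RInt f T b)) with (RInt f a T + RInt f T b) in Hy.
  change (scal (T - a) 1) with ((T - a) * 1) in H2.
  apply Rabs_def2 in Hyl. pose proof (Rle_abs l). lra.
Qed.

Ltac rring := match goal with |- ?a = ?b => change (@eq R a b); ring end.

Lemma der_sq (v : R -> R) x l : is_derive v x l -> is_derive (fun y => v y ^ 2) x (2 * v x * l).
Proof.
  intros H.
  apply (is_derive_ext (fun y => v y * v y)). { intros; rring. }
  assert (Hm := is_derive_mult v v x l l H H (fun n m => Rmult_comm n m)).
  replace (2 * v x * l) with (plus (mult l (v x)) (mult (v x) l)); [exact Hm|].
  change (plus (mult l (v x)) (mult (v x) l)) with (l * v x + v x * l). rring.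
Qed.

Lemma der_prod (f g : R -> R) x lf lg : is_derive f x lf -> is_derive g x lg ->
  is_derive (fun y => f y * g y) x (lf * g x + f x * lg).
Proof.
  intros Hf Hg.
  exact (is_derive_mult f g x lf lg Hf Hg (fun n m => Rmult_comm n m)).
Qed.

Lemma der_opp (f : R -> R) (x l : R) : is_derive f x l -> is_derive (fun y => - f y) x (- l).
Proof. intros H. apply (is_derive_opp (K := R_AbsRing) (V := R_NormedModule) f x l H). Qed.

Lemma der_minus (f g : R -> R) (x lf lg : R) : is_derive f x lf -> is_derive g x lg ->
  is_derive (fun y => f y - g y) x (lf - lg).
Proof. intros Hf Hg. apply (is_derive_minus (K := R_AbsRing) (V := R_NormedModule) f g x lf lg Hf Hg). Qed.

Lemma der_plus (f g : R -> R) (x lf lg : R) : is_derive f x lf -> is_derive g x lg ->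
  is_derive (fun y => f y + g y) x (lf + lg).
Proof. intros Hf Hg. apply (is_derive_plus (K := R_AbsRing) (V := R_NormedModule) f g x lf lg Hf Hg). Qed.

Lemma der_scal (f : R -> R) (c x l : R) : is_derive f x l -> is_derive (fun y => c * f y) x (c * l).
Proof. intros H. apply (is_derive_scal f x c l H). Qed.

Lemma der_eq (f : R -> R) (x l l' : R) : is_derive f x l -> l = l' -> is_derive f x l'.
Proof. intros H ->; exact H. Qed.

Lemma boundR (v v1 v2 : R -> R) R0 : (forall x, is_derive v x (v1 x)) ->
  (forall x, is_derive v1 x (v2 x)) -> (forall x, R0 <= x -> 0 <= v2 x * v x) ->
  square_integrable v -> forall x, R0 <= x -> v x ^ 2 <= v R0 ^ 2.
Proof.
  intros Hv Hv1 Hq Hsq.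
  set (g := fun x => v x ^ 2). set (g1 := fun x => 2 * v x * v1 x).
  set (g2 := fun x => 2 * (v1 x * v1 x + v x * v2 x)).
  assert (Hg : forall x, is_derive g x (g1 x)) by (intros; apply der_sq; auto).
  assert (Hg1 : forall x, is_derive g1 x (g2 x)).
  { intros x. unfold g1, g2.
    apply (is_derive_ext (fun y => 2 * (v y * v1 y))). { intros; rring. }
    apply der_scal. apply der_prod; auto. }
  assert (Hneg : forall x, R0 <= x -> g1 x <= 0).
  { intros r1 Hr1. destruct (Rle_or_lt (g1 r1) 0) as [h|h]; auto. exfalso.
    assert (Hinc : forall y, r1 <= y -> g1 r1 <= g1 y).
    { intros y Hy.
      assert (forall x, is_derive (fun z => - g1 z) x (- g2 x)) by (intros; apply der_opp; auto).
      pose proof (monoR (fun z => - g1 z) (fun z => - g2 z) r1 H).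
      cut (- g1 y <= - g1 r1). lra.
      apply H0; auto. intros x Hx. unfold g2.
      specialize (Hq x ltac:(lra)). nra. }
    set (k := fun y => g r1 + g1 r1 * (y - r1) - g y).
    assert (Hk : forall x, is_derive k x (g1 r1 - g1 x)).
    { intros x. unfold k.
      apply (is_derive_ext (fun y => (g r1 + g1 r1 * (y - r1)) - g y)). { intros; rring. }
      apply (der_minus (fun y => g r1 + g1 r1 * (y - r1)) g x (g1 r1) (g1 x)); auto.
      auto_derive; [exact I | rring]. }
    pose proof (monoR k (fun x => g1 r1 - g1 x) r1 Hk) as Hkm.
    apply (noint_R (fun x => v x ^ 2) (r1 + / g1 r1)).
    - intros; apply pow2_ge_0.
    - intros x. apply (der_cont _ x (g1 x)). apply Hg.
    - intros x Hx.
      assert (Hkx : k x <= k r1). { apply Hkm; [|pose proof (Rinv_0_lt_compat _ h); lra].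
        intros y Hy; specialize (Hinc y Hy); lra. }
      unfold k, g in Hkx.
      assert (g1 r1 * (x - r1) >= 1).
      { assert (x - r1 >= / g1 r1) by lra.
        replace 1 with (g1 r1 * / g1 r1) by (field; lra). nra. }
      pose proof (pow2_ge_0 (v r1)). lra.
    - exact Hsq. }
  intros x Hx. apply (monoR g g1 R0 Hg Hneg x Hx).
Qed.

Lemma boundL (v v1 v2 : R -> R) R0 : (forall x, is_derive v x (v1 x)) ->
  (forall x, is_derive v1 x (v2 x)) -> (forall x, x <= R0 -> 0 <= v2 x * v x) ->
  square_integrable v -> forall x, x <= R0 -> v x ^ 2 <= v R0 ^ 2.
Proof.
  intros Hv Hv1 Hq Hsq.
  set (g := fun x => v x ^ 2). set (g1 := fun x => 2 * v x * v1 x).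
  set (g2 := fun x => 2 * (v1 x * v1 x + v x * v2 x)).
  assert (Hg : forall x, is_derive g x (g1 x)) by (intros; apply der_sq; auto).
  assert (Hg1 : forall x, is_derive g1 x (g2 x)).
  { intros x. unfold g1, g2.
    apply (is_derive_ext (fun y => 2 * (v y * v1 y))). { intros; rring. }
    apply der_scal. apply der_prod; auto. }
  assert (Hpos : forall x, x <= R0 -> 0 <= g1 x).
  { intros r1 Hr1. destruct (Rle_or_lt 0 (g1 r1)) as [h|h]; auto. exfalso.
    assert (Hdec : forall y, y <= r1 -> g1 y <= g1 r1).
    { intros y Hy. apply (monoL g1 g2 r1 Hg1); auto.
      intros x Hx. unfold g2. specialize (Hq x ltac:(lra)). nra. }
    set (k := fun y => g r1 + g1 r1 * (y - r1) - g y).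
    assert (Hk : forall x, is_derive k x (g1 r1 - g1 x)).
    { intros x. unfold k.
      apply (is_derive_ext (fun y => (g r1 + g1 r1 * (y - r1)) - g y)). { intros; rring. }
      apply (der_minus (fun y => g r1 + g1 r1 * (y - r1)) g x (g1 r1) (g1 x)); auto.
      auto_derive; [exact I | rring]. }
    pose proof (monoL k (fun x => g1 r1 - g1 x) r1 Hk) as Hkm.
    apply (noint_L (fun x => v x ^ 2) (r1 + / g1 r1)).
    - intros; apply pow2_ge_0.
    - intros x. apply (der_cont _ x (g1 x)). apply Hg.
    - intros x Hx.
      assert (Hi : / g1 r1 < 0) by (apply Rinv_lt_0_compat; lra).
      assert (Hkx : k x <= k r1). { apply Hkm; [|lra].
        intros y Hy; specialize (Hdec y Hy); lra. }
      unfold k, g in Hkx.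
      assert (g1 r1 * (x - r1) >= 1).
      { assert (x - r1 <= / g1 r1) by lra.
        replace 1 with (g1 r1 * / g1 r1) by (field; lra). nra. }
      pose proof (pow2_ge_0 (v r1)). lra.
    - exact Hsq. }
  intros x Hx. apply (monoL g g1 R0 Hg Hpos x Hx).
Qed.


Lemma kink_ders (a : R) (Phi : R -> R) : is_static_kink a Phi ->
  (forall x, is_derive Phi x (Derive Phi x)) /\ (forall x, is_derive (Derive Phi) x (Derive_n Phi 2 x)).
Proof.
  intros [Hs _]. split; intros x.
  - apply Derive_correct. exact (Hs 1%nat x).
  - apply (Derive_correct (Derive Phi)). exact (Hs 2%nat x).
Qed.

Lemma Edef (a : R) (Phi : R -> R) : 0 < a -> is_static_kink a Phi -> forall x,
  is_derive (fun y => Derive Phi y ^ 2 - (1 - Phi y ^ 2) ^ 2) x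
    (- (4 * x / (x ^ 2 + a ^ 2)) * Derive Phi x ^ 2).
Proof.
  intros Ha HK x. destruct (kink_ders a Phi HK) as [D1 D2].
  destruct HK as [_ [_ [Hode _]]].
  assert (Hp : 0 < x ^ 2 + a ^ 2) by nra.
  apply (is_derive_ext (fun y => Derive Phi y * Derive Phi y - (1 - Phi y * Phi y) * (1 - Phi y * Phi y))).
  { intros; rring. }
  eapply der_eq.
  { apply der_minus.
    - apply der_prod; apply D2.
    - assert (Hw : forall y, is_derive (fun z => 1 - Phi z * Phi z) y (0 - (Derive Phi y * Phi y + Phi y * Derive Phi y))).
      { intros y. apply der_minus. apply (is_derive_const (K := R_AbsRing) (V := R_NormedModule)).
        apply der_prod; apply D1. }
      apply der_prod; apply Hw. }
  specialize (Hode x).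
  assert (H2 : Derive_n Phi 2 x = - 2 * Phi x * (1 - Phi x ^ 2) - 2 * x / (x ^ 2 + a ^ 2) * Derive Phi x) by lra.
  rewrite H2. unfold Rdiv. set (q := / (x ^ 2 + a ^ 2)). rring.
Qed.

Lemma phi_le1 (a : R) (Phi : R -> R) : 0 < a -> is_static_kink a Phi -> forall x, Phi x <= 1.
Proof.
  intros Ha HK x1. destruct (kink_ders a Phi HK) as [D1 D2].
  destruct HK as [_ [_ [Hode [Hp Hm]]]].
  destruct (Rle_or_lt (Phi x1) 1) as [h|h]; auto. exfalso.
  destruct (lim_p Phi 1 Hp (Phi x1 - 1)) as [M1 HM1]; [lra|].
  destruct (lim_m Phi (-1) Hm 1) as [M2 HM2]; [lra|].
  destruct (gmax Phi x1 M1 M2) as [c Hc].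
  - intros x. apply (der_cont _ x _ (D1 x)).
  - intros x Hx. specialize (HM1 x Hx). apply Rabs_def2 in HM1. lra.
  - intros x Hx. specialize (HM2 x Hx). apply Rabs_def2 in HM2. lra.
  - assert (H1 : Derive Phi c = 0) by (apply (fdt Phi c); auto).
    assert (H2 : Derive_n Phi 2 c <= 0) by (apply (sdt Phi (Derive Phi) c); auto).
    specialize (Hode c). rewrite H1 in Hode.
    specialize (Hc x1).
    assert (Phi c * (1 - Phi c ^ 2) < 0) by nra.
    lra.
Qed.

Lemma phi_gem1 (a : R) (Phi : R -> R) : 0 < a -> is_static_kink a Phi -> forall x, -1 <= Phi x.
Proof.
  intros Ha HK x1. destruct (kink_ders a Phi HK) as [D1 D2].
  destruct HK as [_ [_ [Hode [Hp Hm]]]].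
  destruct (Rle_or_lt (-1) (Phi x1)) as [h|h]; auto. exfalso.
  destruct (lim_p Phi 1 Hp 1) as [M1 HM1]; [lra|].
  destruct (lim_m Phi (-1) Hm (-1 - Phi x1)) as [M2 HM2]; [lra|].
  destruct (gmax (fun y => - Phi y) x1 M1 M2) as [c Hc].
  - intros x. apply (der_cont _ x _ (der_opp _ x _ (D1 x))).
  - intros x Hx. specialize (HM1 x Hx). apply Rabs_def2 in HM1. lra.
  - intros x Hx. specialize (HM2 x Hx). apply Rabs_def2 in HM2. lra.
  - assert (H1 : - Derive Phi c = 0) by (apply (fdt (fun y => - Phi y) c); auto; apply der_opp; auto).
    assert (H2 : - Derive_n Phi 2 c <= 0).
    { apply (sdt (fun y => - Phi y) (fun y => - Derive Phi y) c); auto.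
      intros; apply der_opp; auto. apply der_opp; auto. }
    specialize (Hode c). replace (Derive Phi c) with 0 in Hode by lra.
    specialize (Hc x1). simpl in Hc.
    assert (Phi c * (1 - Phi c ^ 2) > 0) by nra.
    lra.
Qed.

Lemma E_nonneg (a : R) (Phi : R -> R) : 0 < a -> is_static_kink a Phi ->
  forall x, (1 - Phi x ^ 2) ^ 2 <= Derive Phi x ^ 2.
Proof.
  intros Ha HK x0. pose proof (Edef a Phi Ha HK) as HE.
  set (E := fun y => Derive Phi y ^ 2 - (1 - Phi y ^ 2) ^ 2) in HE.
  destruct HK as [_ [_ [Hode [Hp Hm]]]].
  destruct (Rle_or_lt 0 (E x0)) as [h|h]; [unfold E in h; lra|]. exfalso.
  set (eta := - E x0).
  set (eps := Rmin 1 (eta / 18)).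
  assert (He1 : eps <= 1) by apply Rmin_l.
  assert (He2 : eps <= eta / 18) by apply Rmin_r.
  assert (He0 : 0 < eps) by (apply Rmin_pos; unfold eta; lra).
  destruct (Rle_or_lt 0 x0) as [hx|hx].
  - assert (Hmon := monoR E _ x0 HE).
    destruct (lim_p Phi 1 Hp eps He0) as [M HM].
    set (y := Rmax M x0 + 1).
    assert (Hy1 : M < y) by (unfold y; pose proof (Rmax_l M x0); lra).
    assert (Hy2 : x0 <= y) by (unfold y; pose proof (Rmax_r M x0); lra).
    assert (HEy : E y <= E x0).
    { apply Hmon; auto. intros x Hx.
      assert (0 <= 4 * x / (x ^ 2 + a ^ 2)) by (apply Rdiv_le_0_compat; nra).
      pose proof (pow2_ge_0 (Derive Phi x)). nra. }
    specialize (HM y Hy1). apply Rabs_def2 in HM.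
    assert (HEy' : Derive Phi y ^ 2 - (1 - Phi y ^ 2) ^ 2 <= - eta) by (unfold eta; rewrite Ropp_involutive; exact HEy).
    clear HEy. rename HEy' into HEy. set (d := Phi y - 1) in *.
    replace (Phi y) with (1 + d) in HEy by (unfold d; ring).
    assert (Hd2 : d ^ 2 <= eps ^ 2) by nra.
    assert (Hb : (2 + d) ^ 2 <= 9) by nra.
    assert (Hq : (1 - (1 + d) ^ 2) ^ 2 = d ^ 2 * (2 + d) ^ 2) by ring.
    pose proof (pow2_ge_0 (Derive Phi y)).
    assert (d ^ 2 * (2 + d) ^ 2 <= eps ^ 2 * 9).
    { apply Rmult_le_compat; auto using pow2_ge_0. }
    assert (eps ^ 2 <= eps * (eta / 18)) by nra.
    assert (Heta : 0 < eta) by (unfold eta; lra).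
    assert (eps * (eta / 18) <= eta / 18) by nra.
    rewrite Hq in HEy. lra.
  - assert (Hmon := monoL E _ x0 HE).
    destruct (lim_m Phi (-1) Hm eps He0) as [M HM].
    set (y := Rmin M x0 - 1).
    assert (Hy1 : y < M) by (unfold y; pose proof (Rmin_l M x0); lra).
    assert (Hy2 : y <= x0) by (unfold y; pose proof (Rmin_r M x0); lra).
    assert (HEy : E y <= E x0).
    { apply Hmon; auto. intros x Hx.
      assert (0 < x ^ 2 + a ^ 2) by nra.
      assert (4 * x / (x ^ 2 + a ^ 2) <= 0).
      { unfold Rdiv. assert (0 < / (x ^ 2 + a ^ 2)) by (apply Rinv_0_lt_compat; auto). nra. }
      pose proof (pow2_ge_0 (Derive Phi x)). nra. }
    specialize (HM y Hy1). apply Rabs_def2 in HM.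
    assert (HEy' : Derive Phi y ^ 2 - (1 - Phi y ^ 2) ^ 2 <= - eta) by (unfold eta; rewrite Ropp_involutive; exact HEy).
    clear HEy. rename HEy' into HEy. set (d := Phi y - -1) in *.
    replace (Phi y) with (-1 + d) in HEy by (unfold d; ring).
    assert (Hd2 : d ^ 2 <= eps ^ 2) by nra.
    assert (Hb : (2 - d) ^ 2 <= 9) by nra.
    assert (Hq : (1 - (-1 + d) ^ 2) ^ 2 = d ^ 2 * (2 - d) ^ 2) by ring.
    pose proof (pow2_ge_0 (Derive Phi y)).
    assert (d ^ 2 * (2 - d) ^ 2 <= eps ^ 2 * 9).
    { apply Rmult_le_compat; auto using pow2_ge_0. }
    assert (eps ^ 2 <= eps * (eta / 18)) by nra.
    assert (Heta : 0 < eta) by (unfold eta; lra).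
    assert (eps * (eta / 18) <= eta / 18) by nra.
    rewrite Hq in HEy. lra.
Qed.


Lemma core (u u1 u2 v v1 v2 W : R -> R) (delta B x0 : R) :
  (forall x, is_derive u x (u1 x)) -> (forall x, is_derive u1 x (u2 x)) ->
  (forall x, is_derive v x (v1 x)) -> (forall x, is_derive v1 x (v2 x)) ->
  0 < delta -> (forall x, delta * (1 + Rabs x) <= u x) -> (forall x, Rabs (v x) <= B) ->
  (forall x, v2 x = W x * v x) -> (forall x, 0 < - u2 x + W x * u x) -> 0 < v x0 -> False.
Proof.
  intros Du Du1 Dv Dv1 Hd Hu HB HW HP Hx0.
  assert (Hup : forall x, 0 < u x).
  { intros x. specialize (Hu x). pose proof (Rabs_pos x). nra. }
  set (f := fun x => v x / u x).
  assert (Hf0 : 0 < f x0) by (unfold f; apply Rdiv_lt_0_compat; auto).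
  assert (HB0 : 0 <= B) by (specialize (HB x0); pose proof (Rabs_pos (v x0)); lra).
  set (T := B / (delta * f x0) + Rabs x0 + 1).
  assert (HT : B < f x0 * (delta * T)).
  { unfold T. assert (0 < delta * f x0) by nra.
    replace (f x0 * (delta * (B / (delta * f x0) + Rabs x0 + 1))) with
      (B + f x0 * delta * (Rabs x0 + 1)) by (field; lra).
    pose proof (Rabs_pos x0). nra. }
  assert (Hout : forall x, T < Rabs x -> f x < f x0).
  { intros x Hx. change (v x / u x < f x0). apply Rlt_div_l; [apply Hup|].
    specialize (Hu x). specialize (HB x). pose proof (Rle_abs (v x)).
    assert (delta * T <= u x).
    { apply Rle_trans with (delta * (1 + Rabs x)); auto. apply Rmult_le_compat_l; lra. }
    assert (f x0 * (delta * T) <= f x0 * u x) by (apply Rmult_le_compat_l; lra). lra. }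
  destruct (gmax f x0 T (- T)) as [c Hc].
  - intros x. unfold f. apply continuity_pt_div.
    + apply (der_cont _ x _ (Dv x)).
    + apply (der_cont _ x _ (Du x)).
    + specialize (Hup x). lra.
  - intros x Hx. apply Hout. pose proof (Rle_abs x). lra.
  - intros x Hx. apply Hout. pose proof (Rabs_Ropp x). pose proof (Rle_abs (- x)). lra.
  - set (M := f c).
    assert (HM : 0 < M) by (pose proof (Hc x0); unfold M; lra).
    assert (Hvc : v c = M * u c) by (unfold M, f; field; specialize (Hup c); lra).
    assert (Hh : forall x, v x - M * u x <= v c - M * u c).
    { intros x. rewrite Hvc. assert (Hq : v x / u x <= M) by exact (Hc x).
      specialize (Hup x).
      assert (Hvx : v x = (v x / u x) * u x) by (field; lra).
      assert ((v x / u x) * u x <= M * u x) by (apply Rmult_le_compat_r; lra). lra. }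
    assert (H2 : v2 c - M * u2 c <= 0).
    { apply (sdt (fun x => v x - M * u x) (fun x => v1 x - M * u1 x) c); auto.
      - intros x. apply der_minus; auto. apply der_scal; auto.
      - apply der_minus; auto. apply der_scal; auto. }
    rewrite HW, Hvc in H2. specialize (HP c).
    assert (0 < M * (- u2 c + W c * u c)) by (apply Rmult_lt_0_compat; auto).
    nra.
Qed.


Definition uf a Phi d x := sqrt (x^2+a^2) * (1 - Phi x^2) + d * (exp x + exp (-x)).
Definition u1f a Phi d x := x / sqrt (x^2+a^2) * (1 - Phi x^2) - 2 * sqrt (x^2+a^2) * Phi x * Derive Phi x + d * (exp x - exp (-x)).
Definition u2f a Phi d x := a^2 / (sqrt (x^2+a^2))^3 * (1 - Phi x^2) - 4 * x / sqrt(x^2+a^2) * Phi x * Derive Phi x - 2 * sqrt (x^2+a^2) * (Derive Phi x)^2 - 2 * sqrt (x^2+a^2) * Phi x * Derive_n Phi 2 x + d*(exp x + exp(-x)).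

Lemma u_der1 a Phi d : 0 < a -> is_static_kink a Phi -> forall x, is_derive (uf a Phi d) x (u1f a Phi d x).
Proof.
  intros Ha HK x. destruct (kink_ders a Phi HK) as [D1 D2].
  assert (Hp : 0 < x * (x * 1) + a * (a * 1)) by nra.
  unfold uf. auto_derive.
  - repeat split; auto. exists (Derive Phi x); apply D1.
  - change (Derive (fun x0 => Phi x0) x) with (Derive Phi x).
    replace (x * (x * 1) + a * (a * 1)) with (x^2+a^2) by rring.
    unfold u1f. assert (Hs : 0 < sqrt (x^2+a^2)) by (apply sqrt_lt_R0; nra).
    set (s := sqrt (x^2+a^2)) in *. field. lra.
Qed.
Lemma u_der2 a Phi d : 0 < a -> is_static_kink a Phi -> forall x, is_derive (u1f a Phi d) x (u2f a Phi d x).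
Proof.
  intros Ha HK x. destruct (kink_ders a Phi HK) as [D1 D2].
  assert (Hp : 0 < x * (x * 1) + a * (a * 1)) by nra.
  unfold u1f. auto_derive.
  - repeat split; auto;
    try (apply Rgt_not_eq; apply sqrt_lt_R0; auto; fail);
    try (exists (Derive Phi x); apply D1; fail);
    try (exists (Derive_n Phi 2 x); apply D2; fail).
  - change (Derive (fun x0 => Phi x0) x) with (Derive Phi x).
    change (Derive (fun x0 => Derive Phi x0) x) with (Derive_n Phi 2 x).
    replace (x * (x * 1) + a * (a * 1)) with (x^2+a^2) by rring.
    unfold u2f. assert (Hs : 0 < sqrt (x^2+a^2)) by (apply sqrt_lt_R0; nra).
    assert (Hs2 : sqrt (x^2+a^2) ^ 2 = x^2+a^2) by (apply pow2_sqrt; nra).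
    set (s := sqrt (x^2+a^2)) in *.
    replace (a ^ 2) with (s ^ 2 - x ^ 2) by lra. field. lra.
Qed.


Theorem mainTheorem1 (a : R) (Phi : R -> R) :
  0 < a ->
  is_static_kink a Phi ->
  forall (v : R -> R) (omega2 : R),
    smooth v ->
    square_integrable v ->
    (exists x, v x <> 0) ->
    (forall r, L_op a Phi v r = omega2 * v r) ->
    0 <= omega2.
Proof.
  intros Ha HK v omega2 Hsv Hsq [x0 Hx0] HL.
  destruct (Rle_or_lt 0 omega2) as [h|h]; auto. exfalso.
  set (mu := - omega2). assert (Hmu : 0 < mu) by (unfold mu; lra).
  destruct (kink_ders a Phi HK) as [D1 D2].
  pose proof (phi_le1 a Phi Ha HK) as Hle1.
  pose proof (phi_gem1 a Phi Ha HK) as Hge1.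
  pose proof (E_nonneg a Phi Ha HK) as HE.
  pose proof HK as HK'. destruct HK' as [_ [_ [Hode [Hp Hm]]]].
  assert (Dv1 : forall x, is_derive v x (Derive v x)) by (intros x; apply Derive_correct; exact (Hsv 1%nat x)).
  assert (Dv2 : forall x, is_derive (Derive v) x (Derive_n v 2 x))
    by (intros x; apply (Derive_correct (Derive v)); exact (Hsv 2%nat x)).
  set (V := kink_potential a Phi).
  assert (HW : forall x, Derive_n v 2 x = (V x + mu) * v x).
  { intros x. specialize (HL x). unfold L_op in HL. unfold V, mu. lra. }
  destruct (lim_p Phi 1 Hp (1/4)) as [M1 HM1]; [lra|].
  destruct (lim_m Phi (-1) Hm (1/4)) as [M2 HM2]; [lra|].
  set (R0 := Rmax (Rabs M1) (Rabs M2) + 1).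
  assert (HR0a : M1 < R0) by (unfold R0; pose proof (Rmax_l (Rabs M1) (Rabs M2)); pose proof (Rle_abs M1); lra).
  assert (HR0b : - R0 < M2) by (unfold R0; pose proof (Rmax_r (Rabs M1) (Rabs M2));
     pose proof (Rle_abs (- M2)); rewrite Rabs_Ropp in *; lra).
  assert (HR0 : 0 < R0) by (unfold R0; pose proof (Rmax_l (Rabs M1) (Rabs M2)); pose proof (Rabs_pos M1); lra).
  assert (Hbig : forall x, R0 <= x \/ x <= - R0 -> 1/2 <= Phi x ^ 2).
  { intros x [Hx|Hx].
    - specialize (HM1 x ltac:(lra)). apply Rabs_def2 in HM1. nra.
    - specialize (HM2 x ltac:(lra)). apply Rabs_def2 in HM2. nra. }
  assert (Hfrac : forall x, 0 <= a ^ 2 / (x ^ 2 + a ^ 2) ^ 2).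
  { intros x. apply Rdiv_le_0_compat. nra. assert (0 < x^2+a^2) by nra. nra. }
  assert (HV1 : forall x, 1/2 <= Phi x ^ 2 -> 1 <= V x).
  { intros x Hx. unfold V, kink_potential. specialize (Hfrac x). lra. }
  assert (HVm2 : forall x, -2 <= V x).
  { intros x. unfold V, kink_potential. specialize (Hfrac x). pose proof (pow2_ge_0 (Phi x)). lra. }
  assert (bR := boundR v (Derive v) (Derive_n v 2) R0 Dv1 Dv2).
  assert (bL := boundL v (Derive v) (Derive_n v 2) (- R0) Dv1 Dv2).
  assert (bR' : forall x, R0 <= x -> v x ^ 2 <= v R0 ^ 2).
  { apply bR; auto. intros x Hx. rewrite HW.
    specialize (HV1 x (Hbig x (or_introl Hx))). pose proof (pow2_ge_0 (v x)). nra. }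
  assert (bL' : forall x, x <= - R0 -> v x ^ 2 <= v (- R0) ^ 2).
  { apply bL; auto. intros x Hx. rewrite HW.
    specialize (HV1 x (Hbig x (or_intror Hx))). pose proof (pow2_ge_0 (v x)). nra. }
  destruct (continuity_ab_maj (fun x => v x ^ 2) (- R0) R0) as [cm [Hcm _]]; [lra| |].
  { intros c _. apply (der_cont _ c _ (der_sq v c _ (Dv1 c))). }
  set (B2 := v R0 ^ 2 + v (- R0) ^ 2 + v cm ^ 2).
  assert (HB2 : forall x, v x ^ 2 <= B2).
  { intros x. unfold B2. pose proof (pow2_ge_0 (v R0)). pose proof (pow2_ge_0 (v (-R0))).
    pose proof (pow2_ge_0 (v cm)).
    destruct (Rle_or_lt R0 x) as [h1|h1]; [specialize (bR' x h1); lra|].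
    destruct (Rle_or_lt x (- R0)) as [h2|h2]; [specialize (bL' x h2); lra|].
    assert (v x ^ 2 <= v cm ^ 2) by (apply (Hcm x); lra). lra. }
  assert (HvB : forall x, Rabs (v x) <= 1 + B2).
  { intros x. specialize (HB2 x). rewrite <- pow2_abs in HB2.
    pose proof (Rabs_pos (v x)). nra. }
  set (delta := mu * a / (24 * exp R0)).
  assert (HeR : 0 < exp R0) by apply exp_pos.
  assert (Hdelta : 0 < delta) by (unfold delta; apply Rdiv_lt_0_compat; nra).
  assert (Hu : forall x, delta * (1 + Rabs x) <= uf a Phi delta x).
  { intros x. unfold uf.
    assert (0 <= sqrt (x ^ 2 + a ^ 2) * (1 - Phi x ^ 2)).
    { apply Rmult_le_pos. apply sqrt_pos. specialize (Hle1 x); specialize (Hge1 x). nra. }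
    assert (1 + Rabs x <= exp x + exp (- x)).
    { pose proof (exp_ineq1_le x). pose proof (exp_ineq1_le (- x)).
      pose proof (exp_pos x). pose proof (exp_pos (- x)).
      destruct (Rle_or_lt 0 x); [rewrite Rabs_right by lra | rewrite Rabs_left by lra]; lra. }
    assert (delta * (1 + Rabs x) <= delta * (exp x + exp (- x))) by (apply Rmult_le_compat_l; lra).
    lra. }
  assert (HP : forall x, 0 < - u2f a Phi delta x + (V x + mu) * uf a Phi delta x).
  { intros x.
    assert (Hpos : 0 < x ^ 2 + a ^ 2) by nra.
    assert (Hs : 0 < sqrt (x^2+a^2)) by (apply sqrt_lt_R0; nra).
    assert (Hs2 : sqrt (x^2+a^2) ^ 2 = x^2+a^2) by (apply pow2_sqrt; nra).
    assert (Hsa : a <= sqrt (x^2+a^2)).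
    { destruct (Rle_or_lt a (sqrt (x^2+a^2))) as [q|q]; auto.
      set (s0 := sqrt (x^2+a^2)) in *.
      assert (s0 * s0 < a * a) by (apply Rmult_le_0_lt_compat; lra). nra. }
    assert (H2 : Derive_n Phi 2 x = - 2 * Phi x * (1 - Phi x ^ 2) - 2 * x / (x ^ 2 + a ^ 2) * Derive Phi x)
      by (specialize (Hode x); lra).
    set (g := exp x + exp (- x)).
    assert (Hg : 0 < g) by (unfold g; pose proof (exp_pos x); pose proof (exp_pos (-x)); lra).
    assert (Hid : - u2f a Phi delta x + (V x + mu) * uf a Phi delta x =
      sqrt (x^2+a^2) * (2 * Derive Phi x ^ 2 - 2 * (1 - Phi x ^ 2) ^ 2)
      + mu * sqrt (x^2+a^2) * (1 - Phi x ^ 2) + delta * (V x - 1 + mu) * g).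
    { unfold u2f, uf. fold g. rewrite H2. unfold V, kink_potential.
      set (s := sqrt (x^2+a^2)) in *. rewrite <- Hs2. field. lra. }
    rewrite Hid.
    set (s := sqrt (x^2+a^2)) in *.
    specialize (HE x). specialize (Hle1 x). specialize (Hge1 x).
    assert (T1 : 0 <= s * (2 * Derive Phi x ^ 2 - 2 * (1 - Phi x ^ 2) ^ 2)) by (apply Rmult_le_pos; lra).
    assert (Hw : 0 <= 1 - Phi x ^ 2) by nra.
    destruct (Rle_or_lt (1/2) (Phi x ^ 2)) as [hb|hb].
    - specialize (HV1 x hb).
      assert (0 <= mu * s * (1 - Phi x ^ 2)) by (apply Rmult_le_pos; nra).
      assert (0 < delta * (V x - 1 + mu) * g) by (apply Rmult_lt_0_compat; [apply Rmult_lt_0_compat|]; lra).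
      lra.
    - assert (Hx : - R0 < x < R0).
      { split; destruct (Rle_or_lt x (- R0)) as [h3|h3]; try lra;
          try (specialize (Hbig x (or_intror h3)); lra);
          destruct (Rle_or_lt R0 x) as [h4|h4]; try lra; specialize (Hbig x (or_introl h4)); lra. }
      assert (Hg2 : g <= 2 * exp R0).
      { unfold g. assert (exp x < exp R0) by (apply exp_increasing; lra).
        assert (exp (- x) < exp R0) by (apply exp_increasing; lra). lra. }
      assert (Hmsw : mu * a / 2 <= mu * s * (1 - Phi x ^ 2)).
      { assert (a / 2 <= s * (1 - Phi x ^ 2)) by nra. nra. }
      specialize (HVm2 x).
      assert (Hdg : 0 <= delta * g) by nra.
      assert (Hq : - 3 * (delta * g) <= delta * (V x - 1 + mu) * g) by nra.
      assert (Hdd : delta * (2 * exp R0) = mu * a / 12) by (unfold delta; field; lra).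
      assert (delta * g <= delta * (2 * exp R0)) by (apply Rmult_le_compat_l; lra).
      assert (0 < mu * a) by nra.
      lra. }
  destruct (Rlt_or_le 0 (v x0)) as [hv|hv].
  - apply (core (uf a Phi delta) (u1f a Phi delta) (u2f a Phi delta) v (Derive v) (Derive_n v 2)
      (fun x => V x + mu) delta (1 + B2) x0); auto.
    + apply u_der1; auto.
    + apply u_der2; auto.
  - apply (core (uf a Phi delta) (u1f a Phi delta) (u2f a Phi delta) (fun y => - v y)
      (fun y => - Derive v y) (fun y => - Derive_n v 2 y) (fun x => V x + mu) delta (1 + B2) x0); auto.
    + apply u_der1; auto.
    + apply u_der2; auto.
    + intros; apply der_opp; auto.
    + intros; apply der_opp; auto.
    + intros x. rewrite Rabs_Ropp. auto.
    + intros x. rewrite HW. ring.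
    + lra.
Qed.
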